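(* Let $\mathcal{L}_q$ be any projective plane of order $q\geq 3$. Then for every sufficiently large integer $n$, $R(P^{(q+1)}_{n,q},\mathcal{L}_q)\geq \left\lfloor\frac{q+2}{q+1}(n-1)\right\rfloor$.
   Context: A projective plane $\mathcal{L}_q$ of order $q$ is a $(q+1)$-regular $(q+1)$-uniform hypergraph on $q^2+q+1$ vertices in which every pair of vertices lies in a unique edge. For $k$-uniform hypergraphs $G,H$, $R(G,H)$ is the least $N$ such that every red/blue colouring of the edges of $K^{(k)}_N$ contains a red copy of $G$ or a blue copy of $H$. The tight path $P^{(k)}_{n,k-1}$ ($n\ge k$) has vertices $v_1,\dots,v_n$ and edges $\{v_i,\dots,v_{i+k-1}\}$ for $i\in[n-k+1]$. *)

(* Defs.v *)
From mathcomp Require Import all_boot.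
Set Implicit Arguments. Unset Strict Implicit. Unset Printing Implicit Defensive.

Definition uniform (V : finType) (k : nat) (E : {set {set V}}) : Prop :=
  forall e, e \in E -> #|e| = k.

Definition projective_plane (q : nat) (V : finType) (E : {set {set V}}) : Prop :=
  [/\ #|V| = q ^ 2 + q + 1,
      uniform (q.+1) E,
      (forall v : V, #|[set e in E | v \in e]| = q.+1) &
      (forall u v : V, u != v -> #|[set e in E | (u \in e) && (v \in e)]| = 1)].

(* Tight path P^{(k)}_{n,k-1} on vertices 'I_n (v_1..v_n are 0,...,n-1):
   edges {i, ..., i+k-1} for 0 <= i <= n-k. *)
Definition tight_path_edges (n k : nat) : {set {set 'I_n}} :=
  [set [set j : 'I_n | (i <= j) && (j < i + k)] | i : 'I_n & i + k <= n].

(* A red/blue colouring of the edges of K_N^(k): c e = true means red.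
   (c is given on all subsets of 'I_N; only its values on k-subsets matter.)
   A red (blue) copy of a hypergraph (V, E) is an injective vertex map whose
   image of every edge is red (blue). *)
Definition has_copy (N : nat) (c : {set 'I_N} -> bool) (col : bool)
  (V : finType) (E : {set {set V}}) : Prop :=
  exists f : V -> 'I_N, injective f /\ forall e, e \in E -> c (f @: e) = col.

Definition ramsey_arrow (N : nat) (VG : finType) (G : {set {set VG}})
  (VH : finType) (H : {set {set VH}}) : Prop :=
  forall c : {set 'I_N} -> bool, has_copy c true G \/ has_copy c false H.

(* Main.v *)
Require Import Defs.
From mathcomp Require Import all_boot zify.


Lemma Zcard (n m : nat) : #|[set j : 'I_n | val j == m]| <= 1.
Proof.
case: (ltnP m n) => h.
  have -> : [set j : 'I_n | val j == m] = [set Ordinal h].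
    by apply/setP => j; rewrite !inE.
  by rewrite cards1.
have -> : [set j : 'I_n | val j == m] = set0.
  apply/setP => j; rewrite !inE; apply/negbTE/eqP => e.
  by move: (ltn_ord j); rewrite /= in e; rewrite e; lia.
by rewrite cards0.
Qed.

Lemma red_part (n N k : nat) (f : 'I_n -> 'I_N) : 0 < k -> k <= n -> injective f ->
  (forall e, e \in tight_path_edges n k ->
     #|f @: e :&: [set x : 'I_N | n - 1 <= x]| != 1) ->
  n - 1 + n %/ k <= N.
Proof.
move=> k0 kn finj Hred.
pose W i := [set j : 'I_n | [&& i <= j, j < i + k & n - 1 <= f j]].
have HW : forall i, i + k <= n -> #|W i| != 1.
  move=> i hi. have hin : i < n by lia.
  have := Hred [set j : 'I_n | (Ordinal hin <= j) && (j < Ordinal hin + k)].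
  have -> : f @: [set j : 'I_n | (Ordinal hin <= j) && (j < Ordinal hin + k)]
      :&: [set x : 'I_N | n - 1 <= x] = f @: W i.
    apply/setP => y; rewrite inE; apply/idP/idP.
      case/andP => /imsetP [j]; rewrite inE => hj -> hb.
      by apply: imset_f; rewrite inE in hb; rewrite inE; case/andP: hj => -> ->; rewrite hb.
    case/imsetP => j hj ->; rewrite /W inE in hj; case/and3P: hj => h1 h2 h3.
    by rewrite imset_f ?inE ?h1 ?h2 ?h3.
  rewrite card_imset //; apply.
  by apply/imsetP; exists (Ordinal hin); rewrite ?inE.
have Hc1 : forall i, #|W i| <= #|W i.+1| + 1.
  move=> i.
  have : W i \subset W i.+1 :|: [set j : 'I_n | val j == i].
    apply/subsetP => j; rewrite !inE => /and3P [h1 h2 h3].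
    case: (eqVneq (val j) i) => [->|ne]; first by rewrite orbT.
    rewrite h3 andbT; apply/orP; left. move: ne h1 h2 => /= ne h1 h2. apply/andP; split; lia.
  move/subset_leq_card; rewrite cardsU; have := Zcard n i; lia.
have Hc2 : forall i, #|W i.+1| <= #|W i| + 1.
  move=> i.
  have : W i.+1 \subset W i :|: [set j : 'I_n | val j == i + k].
    apply/subsetP => j; rewrite !inE => /and3P [h1 h2 h3].
    case: (eqVneq (val j) (i + k)) => [->|ne]; first by rewrite orbT.
    rewrite h3 andbT; apply/orP; left. move: ne h1 h2 => /= ne h1 h2. apply/andP; split; lia.
  move/subset_leq_card; rewrite cardsU; have := Zcard n (i + k); lia.
have H0 : #|W 0| = 0 -> forall i, i + k <= n -> #|W i| = 0.
  move=> h0; elim=> [//|i IH] hi.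
  have := HW _ hi; have := Hc2 i; rewrite IH; lia.
have H2 : 2 <= #|W 0| -> forall i, i + k <= n -> 2 <= #|W i|.
  move=> h0; elim=> [//|i IH] hi.
  have := HW _ hi; have := Hc1 i; have := IH ltac:(lia); lia.
have HW0 := HW 0 ltac:(lia).
have [Hz|Hpos] := posnP #|W 0|.
  have HS : forall j : 'I_n, f j < n - 1.
    move=> j; rewrite ltnNge; apply/negP => hj.
    have := H0 Hz (minn j (n - k)) ltac:(lia).
    move/eqP; rewrite cards_eq0 => /eqP Wi0.
    have : j \in W (minn j (n - k)).
      rewrite inE hj andbT; have := ltn_ord j; move=> ?; apply/andP; split; lia.
    by rewrite Wi0 inE.
  pose g := fun j => Ordinal (HS j).
  have ginj : injective g.
    by move=> a b /(congr1 val) /= e; apply: finj; apply: val_inj.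
  have := @leq_card _ _ g ginj; rewrite !card_ord; lia.
have H2' := H2 ltac:(lia).
pose m := n %/ k.
have Hex : forall t : 'I_m, exists j : 'I_n, j \in W (t * k).
  move=> t; apply/card_gt0P.
  have := H2' (t * k).
  have := ltn_ord t; have := leq_trunc_div n k.
  rewrite /m => h1 h2 h3.
  have : t * k + k <= n.
    have := leq_mul h2 (leqnn k); rewrite mulSn addnC => hh; exact: leq_trans hh h1.
  move/h3; lia.
pose p t := sval (sigW (Hex t)).
have Hp : forall t, n - 1 <= f (p t) /\ t * k <= p t < t * k + k.
  move=> t; have := svalP (sigW (Hex t)); rewrite -/(p t) inE => /and3P [h1 h2 h3].
  by split => //; apply/andP.
have HpN : forall t, f (p t) - (n - 1) < N - (n - 1).
  move=> t; have := Hp t; have := ltn_ord (f (p t)); lia.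
pose g := fun t => Ordinal (HpN t).
have ginj : injective g.
  move=> a b /(congr1 val) /= e.
  have e' : f (p a) = f (p b).
    apply/eqP; rewrite -val_eqE; apply/eqP; move: e (Hp a) (Hp b) => /= e [ha _] [hb _]; lia.
  have epab := finj _ _ e'.
  have [ha hb] := (Hp a, Hp b).
  rewrite epab in ha.
  case: (ltngtP a b) => hab.
  - have := leq_mul hab (leqnn k); rewrite mulSn; lia.
  - have := leq_mul hab (leqnn k); rewrite mulSn; lia.
  - by apply: val_inj.
have := @leq_card _ _ g ginj; rewrite !card_ord.
have : 0 < m by rewrite /m divn_gt0.
lia.
Qed.

Lemma blue_part (q N : nat) (V : finType) (L : {set {set V}}) (f : V -> 'I_N)
  (B : {set 'I_N}) : 1 <= q -> projective_plane q L -> injective f ->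
  (forall e, e \in L -> #|f @: e :&: B| == 1) -> False.
Proof.
move=> q1 [hV _ hdeg hpair] finj Hf.
have Hline : forall e, e \in L -> exists2 s, s \in e & f s \in B.
  move=> e he; have /cards1P [x hx] := Hf e he.
  have : x \in f @: e :&: B by rewrite hx set11.
  rewrite inE => /andP [/imsetP [s hs ->] hb]; by exists s.
have Hline2 : forall e s t, e \in L -> s \in e -> t \in e -> s != t ->
    f s \in B -> f t \in B -> False.
  move=> e s t he hs ht nst hbs hbt.
  have : [set f s; f t] \subset f @: e :&: B.
    apply/subsetP => y; rewrite !inE => /orP [] /eqP ->; rewrite ?hbs ?hbt andbT;
    exact: imset_f.
  move/subset_leq_card; rewrite cards2 (eqP (Hf e he)).
  have -> : (f s != f t) by apply: contra nst => /eqP /finj ->.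
  by [].
have : 0 < #|V| by rewrite hV; lia.
case/card_gt0P => v0 _.
have : 0 < #|[set e in L | v0 \in e]| by rewrite hdeg.
case/card_gt0P => e0; rewrite inE => /andP [he0 _].
have [s hs hbs] := Hline e0 he0.
have : 0 < #|[set~ s]| by rewrite cardsC1 hV; lia.
case/card_gt0P => v; rewrite in_setC1 => nvs.
have hD : #|[set e in L | v \in e] :\: [set e in L | s \in e]| = q.
  rewrite cardsD hdeg.
  have -> : [set e in L | v \in e] :&: [set e in L | s \in e]
      = [set e in L | (v \in e) && (s \in e)].
    apply/setP => e; rewrite !inE.
    by case: (e \in L); case: (v \in e); case: (s \in e).
  by rewrite (hpair v s nvs); lia.
have : 0 < #|[set e in L | v \in e] :\: [set e in L | s \in e]| by rewrite hD.
case/card_gt0P => e1; rewrite !inE => /andP [hn /andP [he1 _]].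
have [t ht hbt] := Hline e1 he1.
have nst : s != t.
  apply/eqP => est; move: hn; rewrite he1 est ht //.
have : 0 < #|[set e in L | (s \in e) && (t \in e)]| by rewrite hpair.
case/card_gt0P => e2; rewrite inE => /andP [he2 /andP [hs2 ht2]].
exact: (Hline2 e2 s t he2 hs2 ht2 nst hbs hbt).
Qed.

Theorem corollary1p11 (q : nat) (V : finType) (L : {set {set V}}) :
  3 <= q -> projective_plane q L ->
  exists n0 : nat, forall n : nat, n0 <= n ->
    forall N : nat, ramsey_arrow N (tight_path_edges n q.+1) L ->
      ((q + 2) * (n - 1)) %/ (q + 1) <= N.
Proof.
move=> q3 hL; exists q.+1 => n hn N Har.
pose B := [set x : 'I_N | n - 1 <= x].
case: (Har (fun s => #|s :&: B| != 1)) => [[f [finj Hf]] | [f [finj Hf]]].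
  have H := @red_part n N q.+1 f (ltn0Sn q) hn finj Hf.
  rewrite (_ : (q + 2) * (n - 1) = (n - 1) * (q + 1) + (n - 1)); last lia.
  rewrite divnMDl ?addn1 //.
  have := leq_div2r q.+1 (leq_subr 1 n); lia.
exfalso; apply: (@blue_part q N V L f B _ hL finj); first lia.
by move=> e he; have := Hf e he; move/negbFE.
Qed.
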